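(* Let $f:[a,b]\to\mathbb{R}$ be an $L$-Lipschitz convex function, and let $f(x^* )=\min_{x\in[a,b]}f(x)$. Set $x_1=\frac{3a+b}{4}$, $x_2=\frac{a+b}{2}$, $x_3=\frac{a+3b}{4}$. Suppose there exist constants $A\in\mathbb{R}$ and $\Delta>0$ such that $f(x_i)\in[A-\Delta,A+\Delta]$ for $i=1,2,3$. Then $$\max\{f(x_1),f(x_2),f(x_3)\}-f(x^* )\le4\Delta.$$ *)

(* Defs.v *)
From Stdlib Require Export Reals Lra.
Open Scope R_scope.

Definition lipschitz_on (f : R -> R) (L a b : R) : Prop :=
  forall x y, a <= x <= b -> a <= y <= b -> Rabs (f x - f y) <= L * Rabs (x - y).

Definition convex_on (f : R -> R) (a b : R) : Prop :=
  forall x y t, a <= x <= b -> a <= y <= b -> 0 <= t <= 1 ->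
    f (t * x + (1 - t) * y) <= t * f x + (1 - t) * f y.

Definition is_min_on (f : R -> R) (a b xs : R) : Prop :=
  a <= xs <= b /\ forall x, a <= x <= b -> f xs <= f x.

(* Main.v *)
Require Import Defs.
From Stdlib Require Import Psatz.

Lemma key (t m y q A D : R) : 1/2 <= t <= 1 -> A - D <= y -> A - D <= q <= A + D ->
  y <= t * m + (1 - t) * q -> A - 3 * D <= m.
Proof. intros. nra. Qed.

Lemma inst (f : R -> R) (a b p q y d h A D : R) :
  convex_on f a b -> a <= p <= b -> a <= q <= b -> 0 < h -> h <= d <= 2 * h ->
  y = (h / d) * p + (1 - h / d) * q ->
  A - D <= f y -> A - D <= f q <= A + D -> A - 3 * D <= f p.
Proof.
  intros Hc Hp Hq Hh Hd Hy H1 H2.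
  assert (Ht : 1/2 <= h / d <= 1).
  { split; [apply (Rmult_le_reg_r d); [lra|]; field_simplify; lra
           | apply (Rmult_le_reg_r d); [lra|]; field_simplify; lra]. }
  apply (key (h/d) (f p) (f y) (f q) A D); auto.
  rewrite Hy. apply Hc; auto; lra.
Qed.

Theorem lemma11 (f : R -> R) (a b L xs A Delta : R) :
  a <= b ->
  lipschitz_on f L a b ->
  convex_on f a b ->
  is_min_on f a b xs ->
  0 < Delta ->
  (let x1 := (3 * a + b) / 4 in
   let x2 := (a + b) / 2 in
   let x3 := (a + 3 * b) / 4 in
   A - Delta <= f x1 <= A + Delta ->
   A - Delta <= f x2 <= A + Delta ->
   A - Delta <= f x3 <= A + Delta ->
   Rmax (f x1) (Rmax (f x2) (f x3)) - f xs <= 4 * Delta).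
Proof.
  intros Hab _ Hc [Hxs _] HD x1 x2 x3 H1 H2 H3.
  assert (Hmax : Rmax (f x1) (Rmax (f x2) (f x3)) <= A + Delta).
  { apply Rmax_lub; [lra|]; apply Rmax_lub; lra. }
  assert (Hm : A - 3 * Delta <= f xs); [|lra].
  destruct (Req_dec a b) as [E|Hne].
  { subst b. assert (xs = x1) by (unfold x1; lra). subst xs. lra. }
  set (h := (b - a) / 4).
  assert (Hh : 0 < h) by (unfold h; lra).
  destruct (Rle_dec xs x1).
  { apply (inst f a b xs x2 x1 (x2 - xs) h A Delta); auto;
      unfold x1, x2, h in *; try lra. field. lra. }
  destruct (Rle_dec xs x2).
  { apply (inst f a b xs x3 x2 (x3 - xs) h A Delta); auto;
      unfold x1, x2, x3, h in *; try lra. field. lra. }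
  destruct (Rle_dec xs x3).
  { apply (inst f a b xs x1 x2 (xs - x1) h A Delta); auto;
      unfold x1, x2, x3, h in *; try lra. field. lra. }
  { apply (inst f a b xs x2 x3 (xs - x2) h A Delta); auto;
      unfold x1, x2, x3, h in *; try lra. field. lra. }
Qed.
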